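(* Consider the algorithm SR-DFF run with input $m$ on a stream consistent with a representation $\mathcal{G}$ of size $m$ with at most $k$ exceptions. For any two valid non-corrupted rules $C[x]$ and $C[x']$ that exist at the same time in the rule list $L$, $G(x)\neq G(x')$.
   Context: Setting. $\mathcal{X}$ is a domain, $\mathcal{Y}$ a finite label set, $\Phi$ a set of binary features on $\mathcal{X}$ closed under negation. A representation of size $m$ is a cover $\mathcal{G}=\{G_1,\dots,G_m\}$ of $\mathcal{X}$ by components with labels $\ell(G)$; each $x$ has a fixed component $G(x)\ni x$; $c^*(x)=\ell(G(x))$; for components $G_i,G_j$ with different labels there is $\phi(G_i,G_j)\in\Phi$ true on all of $G_i$ and false on all of $G_j$, with $\phi(G_j,G_i)=\neg\phi(G_i,G_j)$. Protocol: the learner first gets $x_0$ with label $y_0$; then each example $x_t$ arrives, the learner predicts a label with an explanation example previously seen with that label; on a mistake the teacher gives $y_t=c^*(x_t)$ and $\phi(G(x_t),G(\hat x_t))$, $\hat x_t$ the explanation. An exception is an example on which the feedback is inconsistent with the representation/protocol; a stream is consistent with $\mathcal{G}$ with at most $k$ exceptions if at most $k$ examples are exceptions. Non-exception examples are called valid. SR-DFF (input $m$): receives $(x_0,y_0)$; maintains a list $L$ of rules, each indexed by a representative example $x$, with a conjunction $C[x]$ of features and a label $\texttt{label}[x]$. On $x_t$: if some $C[\hat x]\in L$ is satisfied by $x_t$, predict $\texttt{label}[\hat x]$ with explanation $\hat x$; if incorrect, receive $y_t,\phi$, set $C[\hat x]:=C[\hat x]\wedge\neg\phi$, and delete the rule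 if $C[\hat x]$ has at least $m$ features. Otherwise predict $y_0$ with explanation $x_0$; if incorrect, receive $y_t,\phi$ and add a new rule with empty conjunction $C[x_t]$ and $\texttt{label}[x_t]=y_t$. A rule $C[x]$ is valid if $x$ is a valid example. A rule is corrupted if at least one of the features in its conjunction was added during a refinement step triggered by an example $x_t$ that was an exception. *)

(* Defs.v *)
From mathcomp Require Import all_boot.
Set Implicit Arguments.
Unset Strict Implicit.
Unset Printing Implicit Defensive.

(* Components are indexed by 'I_m; component i is the G_i (as a  *)
(* boolean predicate on X), lab i its label l(G_i), Gx z the fixed    *)
(* component G(z) of z, and sep i j the separating feature            *)
(* phi(G_i, G_j).                                                     *)
Record representation (X : Type) (Y : Type) (m : nat) := Repr {
  component : 'I_m -> X -> bool;
  lab  : 'I_m -> Y;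
  Gx   : X -> 'I_m;
  sep  : 'I_m -> 'I_m -> X -> bool }.

(* Phi is the set of binary features (closed under negation, assumed   *)
(* separately in the theorem).                                        *)
Definition is_repr (X : Type) (Y : eqType) (m : nat)
    (Phi : (X -> bool) -> Prop) (R : representation X Y m) : Prop :=
  [/\ forall z, component R (Gx R z) z,
      forall i j, lab R i != lab R j -> Phi (sep R i j),
      forall i j, lab R i != lab R j -> forall z, component R i z -> sep R i j z,
      forall i j, lab R i != lab R j -> forall z, component R j z -> ~~ sep R i j z
    & forall i j, lab R i != lab R j -> forall z, sep R j i z = ~~ sep R i j z].

Definition cstar (X : Type) (Y : Type) (m : nat) (R : representation X Y m) (z : X) : Y :=
  lab R (Gx R z).

(* representative example x_s ("rep").  The conjunction is a list of   *)
(* features, each tagged (ghost information) with the time step whose  *)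
(* refinement added it.                                                *)
Record rule (X : Type) (Y : Type) := Rule {
  rep  : nat;
  conj : seq (nat * (X -> bool));
  rlab : Y }.

Definition sat (X Y : Type) (r : rule X Y) (z : X) : bool :=
  all (fun p => p.2 z) (conj r).

Definition refine (X Y : Type) (t : nat) (f : X -> bool) (r : rule X Y) : rule X Y :=
  Rule (rep r) (rcons (conj r) (t, fun z => ~~ f z)) (rlab r).

(* One step of SR-DFF (input m) on example x t, t >= 1, with teacher     *)
(* feedback y t (label) and phi t (feature), used only on mistakes.    *)
(* sr_step ... t L L' e p : rule list L becomes L'; the explanation is  *)
(* x (e) and the predicted label is p.  The choice among satisfied     *)
(* rules is left nondeterministic.                                     *)
Inductive sr_step (X : Type) (Y : eqType) (m : nat) (x : nat -> X) (y : nat -> Y)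
    (phi : nat -> X -> bool) (t : nat) :
    seq (rule X Y) -> seq (rule X Y) -> nat -> Y -> Prop :=
| StepHitCorrect L1 r L2 :
    sat r (x t) -> rlab r = y t ->
    sr_step m x y phi t (L1 ++ r :: L2) (L1 ++ r :: L2) (rep r) (rlab r)
| StepHitRefine L1 r L2 :
    sat r (x t) -> rlab r <> y t ->
    size (conj (refine t (phi t) r)) < m ->
    sr_step m x y phi t (L1 ++ r :: L2) (L1 ++ refine t (phi t) r :: L2)
            (rep r) (rlab r)
| StepHitDelete L1 r L2 :
    sat r (x t) -> rlab r <> y t ->
    m <= size (conj (refine t (phi t) r)) ->
    sr_step m x y phi t (L1 ++ r :: L2) (L1 ++ L2) (rep r) (rlab r)
| StepMissCorrect L :
    all (fun r => ~~ sat r (x t)) L -> y 0 = y t ->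
    sr_step m x y phi t L L 0 (y 0)
| StepMissAdd L :
    all (fun r => ~~ sat r (x t)) L -> y 0 <> y t ->
    sr_step m x y phi t L (rcons L (Rule t [::] (y t))) 0 (y 0).

(* A run: L t is the rule list after processing x t (L 0 = [::] after   *)
(* receiving (x 0, y 0)); e t is the time index of the explanation and  *)
(* p t the predicted label at step t >= 1.                              *)
Definition sr_run (X : Type) (Y : eqType) (m : nat) (x : nat -> X) (y : nat -> Y)
    (phi : nat -> X -> bool) (L : nat -> seq (rule X Y)) (e : nat -> nat)
    (p : nat -> Y) : Prop :=
  L 0 = [::] /\
  forall t, sr_step m x y phi t.+1 (L t) (L t.+1) (e t.+1) (p t.+1).

Definition exception (X : Type) (Y : eqType) (m : nat) (R : representation X Y m)
    (x : nat -> X) (y : nat -> Y) (phi : nat -> X -> bool)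
    (e : nat -> nat) (p : nat -> Y) (t : nat) : Prop :=
  if t is 0 then y 0 <> cstar R (x 0)
  else y t <> cstar R (x t) \/
       (p t <> y t /\ phi t <> sep R (Gx R (x t)) (Gx R (x (e t)))).

Definition at_most_exceptions (X : Type) (Y : eqType) (m : nat) (R : representation X Y m)
    (x : nat -> X) (y : nat -> Y) (phi : nat -> X -> bool)
    (e : nat -> nat) (p : nat -> Y) (k : nat) : Prop :=
  exists s : seq nat, size s <= k /\
    forall t, exception R x y phi e p t -> t \in s.

Definition valid_rule (X : Type) (Y : eqType) (m : nat) (R : representation X Y m)
    (x : nat -> X) (y : nat -> Y) (phi : nat -> X -> bool)
    (e : nat -> nat) (p : nat -> Y) (r : rule X Y) : Prop :=
  ~ exception R x y phi e p (rep r).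

Definition corrupted (X : Type) (Y : eqType) (m : nat) (R : representation X Y m)
    (x : nat -> X) (y : nat -> Y) (phi : nat -> X -> bool)
    (e : nat -> nat) (p : nat -> Y) (r : rule X Y) : Prop :=
  exists2 s, s \in map fst (conj r) & exception R x y phi e p s.

(* Main.v *)
Require Import Defs.
From mathcomp Require Import all_boot.
From Stdlib Require Classical_Prop.
Set Implicit Arguments.
Unset Strict Implicit.

Fixpoint allP (A : Type) (P : A -> Prop) (s : seq A) : Prop :=
  match s with [::] => True | a :: s' => P a /\ allP P s' end.

Lemma allP_cat (A : Type) (P : A -> Prop) s1 s2 :
  allP P (s1 ++ s2) <-> allP P s1 /\ allP P s2.
Proof. elim: s1 => [|a s IH] /=; first by tauto. move: IH; tauto. Qed.

Lemma allP_rcons (A : Type) (P : A -> Prop) s a :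
  allP P (rcons s a) <-> allP P s /\ P a.
Proof. rewrite -cats1; move: (allP_cat P s [:: a]) => /=; tauto. Qed.

Lemma allP_has (A : Type) (q : pred (nat * (A -> bool))) (s : seq (nat * (A -> bool))) (P' : _ -> Prop) :
  allP P' s -> has q s -> exists sf, [/\ P' sf, q sf & sf.1 \in map fst s].
Proof.
elim: s => [|a s IH] //= [Pa Ps] /orP [qa|hs].
  by exists a; rewrite inE eqxx.
have [sf [H1 H2 H3]] := IH Ps hs.
by exists sf; rewrite inE H3 orbT.
Qed.

Section Inv.
Variables (X : Type) (Y : eqType) (m : nat) (x : nat -> X) (y : nat -> Y)
  (phi : nat -> X -> bool) (e : nat -> nat) (p : nat -> Y).

Definition Rel (a b : rule X Y) : bool :=
  has (fun sf => ~~ sf.2 (x (rep b))) (conj a).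

Definition FP (a : rule X Y) (sf : nat * (X -> bool)) : Prop :=
  [/\ 0 < sf.1, sf.2 = (fun z => ~~ phi sf.1 z), e sf.1 = rep a,
      p sf.1 = rlab a & p sf.1 <> y sf.1].

Definition RP (a : rule X Y) : Prop :=
  rlab a = y (rep a) /\ allP (FP a) (conj a).

Definition Inv (Lt : seq (rule X Y)) : Prop := pairwise Rel Lt /\ allP RP Lt.

Lemma step_inv t Lt Lt' ee pp :
  sr_step m x y phi t Lt Lt' ee pp -> ee = e t -> pp = p t -> 0 < t ->
  Inv Lt -> Inv Lt'.
Proof.
case => [L1 r L2 _ _ _ _ _ //| L1 r L2 _ hne _ He Hp t0 [Hpw Hall]
  | L1 r L2 _ _ _ _ _ _ [Hpw Hall]
  | L _ _ _ _ _ //| L hall _ _ _ t0 [Hpw Hall]].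
- split.
    move: Hpw; rewrite !pairwise_cat !pairwise_cons !allrel_consr.
    case/and3P => /andP [H1 H2] H3 /andP [H4 H5]; rewrite H2 H3 H5 /= !andbT.
    rewrite H1 /=; apply: sub_all H4 => b /=; rewrite /Rel /= has_rcons => ->; by rewrite orbT.
  move/allP_cat: Hall => /= [H1 [[H2 H3] H4]].
  apply/allP_cat; do !split => //=.
  apply/allP_rcons; split => //.
  by split => //=; rewrite -?He -?Hp //.
- split.
    move: Hpw; rewrite !pairwise_cat !pairwise_cons !allrel_consr.
    by case/and3P => /andP [H1 H2] H3 /andP [H4 H5]; rewrite H2 H3 H5.
  by move/allP_cat: Hall => /= [H1 [[H2 H3] H4]]; apply/allP_cat.
- split.
    rewrite pairwise_rcons Hpw andbT.
    apply: sub_all hall => a /=; rewrite /sat /Rel /= -has_predC.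
    by apply: sub_has => sf.
  by apply/allP_rcons; split.
Qed.

Lemma run_inv L : sr_run m x y phi L e p -> forall t, Inv (L t).
Proof.
case=> H0 Hs; elim => [|t IH]; first by rewrite H0.
exact: step_inv (Hs t) erefl erefl erefl IH.
Qed.
End Inv.

Theorem lemma2 (X : Type) (Y : finType) (Phi : (X -> bool) -> Prop)
    (Phi_neg : forall f, Phi f -> Phi (fun z => ~~ f z))
    (m k : nat) (R : representation X Y m) (HR : is_repr Phi R)
    (x : nat -> X) (y : nat -> Y) (phi : nat -> X -> bool)
    (L : nat -> seq (rule X Y)) (e : nat -> nat) (p : nat -> Y)
    (Hrun : sr_run m x y phi L e p)
    (Hk : at_most_exceptions R x y phi e p k)
    (T : nat) (L1 L2 L3 : seq (rule X Y)) (r r' : rule X Y)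
    (HL : L T = L1 ++ r :: L2 ++ r' :: L3)
    (Hv : valid_rule R x y phi e p r) (Hc : ~ corrupted R x y phi e p r)
    (Hv' : valid_rule R x y phi e p r') (Hc' : ~ corrupted R x y phi e p r') :
  component R (Gx R (x (rep r))) <> component R (Gx R (x (rep r'))).
Proof.
move=> Heq.
have [Hpw Hall] := run_inv Hrun T.
rewrite HL in Hpw Hall.
move: Hpw; rewrite pairwise_cat pairwise_cons all_cat /= => /and3P [_ _ /andP [/andP [_ /andP [Hrr _]] _]].
move/allP_cat: Hall => /= [_ [[Hlab Hfp] _]].
have [[s f] [[/= s0 Hf He Hp Hpy] /= Hx Hin]] := allP_has Hfp Hrr.
have Hyr : y (rep r) = cstar R (x (rep r)).
  apply/eqP; apply/negP => /negP /eqP hne; apply: Hv.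
  by case: (rep r) hne => [|n] hne //=; left.
have Hs : ~ exception R x y phi e p s by move=> hx; apply: Hc; exists s.
move: Hs; case: s s0 Hf He Hp Hpy Hin Hx => [//|s] _ Hf He Hp Hpy Hin Hx Hs.
have Hys : y s.+1 = cstar R (x s.+1).
  by apply/eqP; apply/negP => /negP /eqP hne; apply: Hs; left.
have Hphi : phi s.+1 = sep R (Gx R (x s.+1)) (Gx R (x (e s.+1))).
  case: (Classical_Prop.classic (phi s.+1 = sep R (Gx R (x s.+1)) (Gx R (x (e s.+1))))) => [//|hne].
  by exfalso; apply: Hs; right.
case: HR => H1 _ _ H4 _.
have Hne : lab R (Gx R (x s.+1)) != lab R (Gx R (x (rep r))).
  by apply/eqP => hh; apply: Hpy; rewrite Hp Hlab Hys Hyr /cstar hh.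
have := H4 _ _ Hne (x (rep r')).
rewrite Heq H1 => /(_ isT).
move: Hx; rewrite Hf /= Hphi He negbK => -> //.
Qed.
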